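(* Let $m\ge 3$. For every $\epsilon>0$ there exists $\delta>0$ such that for every polynomial $f(z)=z^{m}+\sum_{k=0}^{m-1}a_kz^k$ satisfying the $\delta$-condition and $|a_{0}|\ge 2^{\frac{1}{m-1}}+\epsilon$, one has $|a_{0}|-b(f)\ge\frac{\epsilon}{3}$; equivalently, $\{z\in\mathbb{C}: |z|\ge |a_0|-\tfrac{\epsilon}{3}\}\subseteq\Omega(f)$.
   Context: A monic polynomial $f(z)=z^{m}+\sum_{k=0}^{m-1}a_{k}z^{k}$ satisfies the $\delta$-condition if $|a_{k}|<\delta$ for all $1\le k\le m-1$ (no condition on $a_0$). $\Omega(f)=\{z\in\hat{\mathbb{C}}: f^{n}(z)\to\infty \text{ as } n\to+\infty\}$ ($f^n$ the $n$-th iterate), and $b(f)=\sup\{|z|: z\in\mathbb{C}\setminus\Omega(f)\}$. *)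

(* Defs.v *)
From HB Require Import structures.
From mathcomp Require Import all_boot all_order all_algebra.
From mathcomp Require Import all_classical all_reals all_analysis.
From mathcomp Require Import complex.
Set Implicit Arguments. Unset Strict Implicit. Unset Printing Implicit Defensive.
Import Order.TTheory GRing.Theory Num.Theory.
Local Open Scope ring_scope.
Local Open Scope classical_set_scope.

Definition cabs (R : realType) (z : R[i]) : R := Normc.normc z.

Definition delta_condition (R : realType) (delta : R) (f : {poly R[i]}) : Prop :=
  forall k : nat, (1 <= k)%N -> (k < (size f).-1)%N -> cabs f`_k < delta.

(* z lies in Omega(f) \cap C : the orbit f^n(z) tends to infinity *)
Definition escapes (R : realType) (f : {poly R[i]}) (z : R[i]) : Prop :=
  (fun n : nat => cabs (iter n (fun w => f.[w]) z)) @ \oo --> +oo.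

Definition b_of (R : realType) (f : {poly R[i]}) : R :=
  sup [set cabs z | z in [set z : R[i] | ~ escapes f z]].

(* Main.v *)
Require Import Defs.
From HB Require Import structures.
From mathcomp Require Import all_boot all_order all_algebra.
From mathcomp Require Import all_classical all_reals all_analysis.
From mathcomp Require Import complex.
From mathcomp Require Import ring lra.
Import Order.TTheory GRing.Theory Num.Theory.
Local Open Scope ring_scope.
Local Open Scope classical_set_scope.

Lemma bern (R : realType) (a d : R) n : 1 <= a -> 0 <= d -> a ^+ n + n%:R * d <= (a + d) ^+ n.
Proof.
move=> ha hd; elim: n => [|n IH]; first by rewrite !expr0 mul0r addr0.
have an : 1 <= a ^+ n by rewrite exprn_ege1.
rewrite !exprS -natr1.
have h1 : (a + d) * (a ^+ n + n%:R * d) <= (a + d) * (a + d) ^+ n.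
  by rewrite ler_wpM2l // addr_ge0 // (le_trans _ ha).
apply: le_trans h1.
have n0 : 0 <= n%:R :> R by [].
have h2 : 0 <= (a - 1) * (n%:R * d) by apply: mulr_ge0; [lra| exact: mulr_ge0].
have h3 : 0 <= d * (a ^+ n - 1) by apply: mulr_ge0; lra.
have h4 : 0 <= n%:R * (d * d) by apply: mulr_ge0 => //; exact: mulr_ge0.
nra.
Qed.

Lemma key (R : realType) (k : nat) (s e r A x0 dl : R) :
  (1 <= k)%N -> 1 <= s -> s ^+ k = 2 -> 0 < e -> s + e <= A -> A - e / 3 <= r ->
  x0 = (s + 2 * e / 3) ^+ k -> 0 <= dl -> dl * k%:R * x0 <= (x0 - 2) / 4 ->
  r + e / 6 <= r ^+ k.+1 - A - k%:R * dl * r ^+ k.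
Proof.
move=> hk hs hsk he hA hr hx0 hdl hd.
have hr1 : s + 2 * e / 3 <= r by lra.
have r1 : 1 <= r by lra.
have hx : x0 <= r ^+ k by rewrite hx0 lerXn2r // ?nnegrE; lra.
have hx02 : 2 + 2 * e / 3 <= x0.
  have := @bern R s (2*e/3) k hs (_ : 0 <= 2 * e / 3).
  have k1 : 1 <= k%:R :> R by rewrite ler1n.
  rewrite -hx0 hsk => h; have : 2 * e / 3 <= k%:R * (2 * e / 3) by nra.
  move=> h'; apply: le_trans (h _) => //; [lra | lra].
have x0p : 0 < x0 by lra.
set x := r ^+ k in hx *.
set dk := dl * k%:R in hd *.
have h6 : dk * x <= (x - 2) / 4.
  have e1 : x0 * (dk * x) <= x0 * ((x - 2) / 4).
    have : x * (dk * x0) <= x * ((x0 - 2) / 4) by rewrite ler_wpM2l //; lra.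
    nra.
  by rewrite ler_pM2l in e1.
have h7 : 0 <= (r - 1) * (x - 2) by apply: mulr_ge0; lra.
rewrite exprS -/x.
have -> : k%:R * dl * x = dk * x by rewrite /dk; ring.
nra.
Qed.

Lemma cabsD {R : realType} (x y : R[i]) : cabs (x + y) <= cabs x + cabs y.
Proof. exact: (@le_normcD R x y). Qed.

Lemma cabsN {R : realType} (x : R[i]) : cabs (- x) = cabs x.
Proof. exact: (@normcN R x). Qed.

Lemma cabsM {R : realType} (x y : R[i]) : cabs (x * y) = cabs x * cabs y.
Proof. exact: Normc.normcM. Qed.

Lemma cabsX {R : realType} (x : R[i]) n : cabs (x ^+ n) = cabs x ^+ n.
Proof.
elim: n => [|n IH]; first by rewrite !expr0; exact: Normc.normc1.
by rewrite !exprS cabsM IH.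
Qed.

Lemma cabs_ge0 {R : realType} (x : R[i]) : 0 <= cabs x.
Proof. by case: x => a b; rewrite /cabs /= sqrtr_ge0. Qed.

Lemma cabs_sum {R : realType} n (F : 'I_n -> R[i]) :
  cabs (\sum_(i < n) F i) <= \sum_(i < n) cabs (F i).
Proof.
elim/big_rec2: _ => [|i y1 y2 _ IH]; first by rewrite /cabs Normc.normc0.
by have := cabsD (F i) y2; lra.
Qed.

Lemma polybound (R : realType) (k : nat) (dl : R) (f : {poly R[i]}) (z : R[i]) :
  f \is monic -> size f = k.+2 -> delta_condition dl f -> 1 <= cabs z ->
  cabs z ^+ k.+1 - cabs f`_0 - k%:R * dl * cabs z ^+ k <= cabs f.[z].
Proof.
move=> fm sf hd z1.
have r0 : 0 <= cabs z by lra.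
rewrite horner_coef sf big_ord_recr /= big_ord_recl /=.
have -> : f`_k.+1 = 1 by move/monicP: fm; rewrite lead_coefE sf.
rewrite mul1r expr0 mulr1.
set S := \sum_(i < k) _.
have hS : cabs S <= k%:R * dl * cabs z ^+ k.
  have h1 := @cabs_sum R k (fun i : 'I_k => f`_(bump 0 i) * z ^+ bump 0 i).
  apply: (le_trans h1).
  have -> : k%:R * dl * cabs z ^+ k = \sum_(i < k) (dl * cabs z ^+ k).
    by rewrite sumr_const card_ord mulr_natl -mulrnAl.
  apply: ler_sum => i _.
  rewrite cabsM cabsX /bump /= add1n.
  have hi := ltn_ord i.
  apply: ler_pM; [exact: cabs_ge0 | exact: exprn_ge0 | |].
    by apply/ltW/hd; rewrite // sf.
  exact: ler_weXn2l.
set P := z ^+ k.+1.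
have e : P = (f`_0 + S + P) + (- f`_0) + (- S) by ring.
have := cabsD (f`_0 + S + P + - f`_0) (- S).
have := cabsD (f`_0 + S + P) (- f`_0).
rewrite -e cabsN cabsN /P cabsX.
move=> h1 h2.
set a := cabs (_ + _ + z ^+ k.+1 - _) in h1 h2.
set b := cabs (_ + _ + z ^+ k.+1) in h1 *.
lra.
Qed.

Lemma escape_of (R : realType) (g : R[i] -> R[i]) (z : R[i]) (c : R) :
  0 < c -> (forall n : nat, cabs z + n%:R * c <= cabs (iter n g z)) ->
  (fun n : nat => cabs (iter n g z)) @ \oo --> +oo.
Proof.
move=> c0 h; apply/cvgryPge => B.
exists (Num.truncn ((B - cabs z) / c)).+1 => // n /= hn.
apply: le_trans (h n).
have t := truncnS_gt ((B - cabs z) / c).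
have hn' : ((Num.truncn ((B - cabs z) / c)).+1%:R : R) <= n%:R by rewrite ler_nat.
have : (B - cabs z) / c < n%:R by lra.
rewrite ltr_pdivrMr // => ?; lra.
Qed.

Theorem mainTheorem10 (R : realType) (m : nat) (hm : (3 <= m)%N)
  (eps : R) (heps : 0 < eps) :
  exists2 delta : R, 0 < delta &
    forall f : {poly R[i]},
      f \is monic -> size f = m.+1 ->
      delta_condition delta f ->
      powR 2 ((m - 1)%:R)^-1 + eps <= cabs f`_0 ->
      eps / 3 <= cabs f`_0 - b_of f.
Proof.
case: m hm => [//|k] hk.
have -> : (k.+1 - 1 = k)%N by rewrite subn1.
have k1 : (1 <= k)%N by case: k hk.
have kR : (1 : R) <= k%:R by rewrite ler1n.
set s := powR 2 (k%:R)^-1.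
have s1 : 1 <= s.
  rewrite /s -[X in X <= _](powRr0 2); apply: ler_powR; first by lra.
  by rewrite invr_ge0 ler0n.
have sk : s ^+ k = 2.
  rewrite /s -powR_mulrn ?powR_ge0 // -powRrM mulVf ?powRr1 //.
  by rewrite pnatr_eq0 -lt0n.
set x0 := (s + 2 * eps / 3) ^+ k.
have hx02 : 2 + 2 * eps / 3 <= x0.
  have := @bern R s (2*eps/3) k s1 (_ : 0 <= 2 * eps / 3).
  rewrite sk => h; have : 2 * eps / 3 <= k%:R * (2 * eps / 3) by nra.
  move=> h'; apply: le_trans (h _) => //; [lra | lra].
exists ((x0 - 2) / (4 * (k%:R * x0))).
  apply: divr_gt0; first lra.
  apply: mulr_gt0; first lra.
  apply: mulr_gt0; lra.
move=> f fm sf hd hA.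
set A := cabs f`_0 in hA *.
have step : forall w, A - eps / 3 <= cabs w -> cabs w + eps / 6 <= cabs f.[w].
  move=> w hw.
  have w1 : 1 <= cabs w by lra.
  have := @polybound R k _ f w fm sf hd w1.
  have := @key R k s eps (cabs w) A x0 ((x0 - 2) / (4 * (k%:R * x0))) k1 s1 sk heps hA hw erefl.
  move=> h1 h2; apply: le_trans h2; apply: h1.
    apply: divr_ge0; first lra.
    apply: mulr_ge0; first lra.
    apply: mulr_ge0; lra.
  rewrite le_eqVlt; apply/orP; left; apply/eqP; field.
  apply/andP; split; lra.
have esc : forall z, A - eps / 3 <= cabs z -> escapes f z.
  move=> z hz; apply: (@escape_of R (fun w => f.[w]) z (eps / 6)); first lra.
  elim => [|n IH]; first by rewrite /= mul0r addr0.
  rewrite iterS -[n.+1]addn1 natrD.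
  have h := step (iter n (fun w => f.[w]) z).
  have : A - eps / 3 <= cabs (iter n (fun w => f.[w]) z).
    have h0 : 0 <= n%:R * (eps / 6) by apply: mulr_ge0 => //; lra.
    lra.
  move=> h'; have := h h'; lra.
rewrite /b_of.
set S := [set cabs z | z in _].
suff : sup S <= A - eps / 3 by lra.
have [ne|emp] := pselect (S !=set0).
  apply: ge_sup => // y [z /= hz <-].
  have [//|lt] := leP (cabs z) (A - eps / 3).
  by exfalso; apply: hz; apply: esc; lra.
rewrite (_ : S = set0); last first.
  apply/seteqP; split => y hy //; by exfalso; apply: emp; exists y.
rewrite sup0; lra.
Qed.
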